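(* The family $\mathcal A$ of achievement sets contained in $[0,1]$ is nowhere dense in $K_0([0,1])$ (with respect to the Pompeiu–Hausdorff metric).
   Context: For an absolutely convergent real series $\sum_n a_n$, its achievement set is $E(a_n):=\{\sum_{n\in A}a_n:\ A\subset\mathbb N\}$. $\mathcal A$ denotes the family of all such sets $E(a_n)$ contained in $[0,1]$. $K_0([0,1])$ is the family of compact subsets of $[0,1]$ containing $0$, with the Pompeiu–Hausdorff metric $d_H(A,B)=\max\{\sup_{a\in A}\operatorname{dist}(a,B),\sup_{b\in B}\operatorname{dist}(b,A)\}$. *)

(* Defs.v *)
From Stdlib Require Import Reals.
From Coquelicot Require Import Coquelicot.
Open Scope R_scope.

Definition abs_conv (a : nat -> R) : Prop := ex_series (fun n => Rabs (a n)).

(* Achievement set E(a_n) = { sum_{n in A} a_n : A subset N };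
   a subset A of N is encoded by its indicator A : nat -> bool. *)
Definition achievement_set (a : nat -> R) : R -> Prop :=
  fun x => exists A : nat -> bool,
    is_series (fun n => if A n then a n else 0) x.

Definition in_calA (S : R -> Prop) : Prop :=
  exists a : nat -> R, abs_conv a /\
    (forall x, S x <-> achievement_set a x) /\
    (forall x, S x -> 0 <= x <= 1).

Definition K0 (K : R -> Prop) : Prop :=
  compact K /\ (forall x, K x -> 0 <= x <= 1) /\ K 0.

Definition dist_set (x : R) (B : R -> Prop) : R :=
  real (Glb_Rbar (fun d => exists b, B b /\ d = Rabs (x - b))).

Definition excess (A B : R -> Prop) : R :=
  real (Lub_Rbar (fun d => exists a, A a /\ d = dist_set a B)).

(* Pompeiu-Hausdorff distance (finite for nonempty subsets of [0,1]). *)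
Definition dH (A B : R -> Prop) : R := Rmax (excess A B) (excess B A).

Definition closure_K0 (F : (R -> Prop) -> Prop) (K : R -> Prop) : Prop :=
  K0 K /\ forall eps, 0 < eps -> exists L, K0 L /\ F L /\ dH K L < eps.

Definition interior_K0 (F : (R -> Prop) -> Prop) (K : R -> Prop) : Prop :=
  K0 K /\ exists eps, 0 < eps /\ forall L, K0 L -> dH K L < eps -> F L.

Definition nowhere_dense_K0 (F : (R -> Prop) -> Prop) : Prop :=
  forall K, ~ interior_K0 (closure_K0 F) K.

(* Main.v *)
Require Import Defs.
From Stdlib Require Import Reals Lra Classical.
From Coquelicot Require Import Coquelicot.
Open Scope R_scope.

Lemma abs_lt (x c : R) : Rabs x < c -> - c < x < c.
Proof. intros H; destruct (Rabs_def2 _ _ H); lra. Qed.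

Lemma dist_le (x : R) (B : R -> Prop) (b c : R) :
  B b -> Rabs (x - b) <= c -> 0 <= c -> dist_set x B <= c.
Proof.
  intros Hb Hc Hc0. unfold dist_set.
  destruct (Glb_Rbar_correct (fun d => exists b, B b /\ d = Rabs (x - b))) as [Hlb _].
  assert (H := Hlb (Rabs (x - b)) (ex_intro _ b (conj Hb eq_refl))).
  destruct (Glb_Rbar _) as [g| |]; simpl in *; lra.
Qed.

Lemma dist_lt (x : R) (B : R -> Prop) (b0 c : R) :
  B b0 -> dist_set x B < c -> exists b, B b /\ Rabs (x - b) < c.
Proof.
  intros Hb0 Hd. apply NNPP; intro Hn.
  unfold dist_set in Hd.
  destruct (Glb_Rbar_correct (fun d => exists b, B b /\ d = Rabs (x - b))) as [Hlb Hglb].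
  assert (H1 := Hlb (Rabs (x - b0)) (ex_intro _ b0 (conj Hb0 eq_refl))).
  assert (H2 : Rbar_le c (Glb_Rbar (fun d => exists b, B b /\ d = Rabs (x - b)))).
  { apply Hglb. intros d [b [Hb ->]]. simpl.
    destruct (Rle_lt_dec c (Rabs (x - b))) as [h|h]; auto.
    exfalso; apply Hn; exists b; auto. }
  destruct (Glb_Rbar _) as [g| |]; simpl in *; lra.
Qed.

Lemma excess_le (A B : R -> Prop) (c : R) :
  (forall a, A a -> dist_set a B <= c) -> 0 <= c -> excess A B <= c.
Proof.
  intros H Hc. unfold excess.
  destruct (Lub_Rbar_correct (fun d => exists a, A a /\ d = dist_set a B)) as [_ Hlub].
  assert (H2 : Rbar_le (Lub_Rbar (fun d => exists a, A a /\ d = dist_set a B)) c).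
  { apply Hlub. intros d [a [Ha ->]]. simpl. auto. }
  destruct (Lub_Rbar _) as [g| |]; simpl in *; lra.
Qed.

Lemma excess_ge (A B : R -> Prop) (a : R) :
  A a -> (forall a', A a' -> dist_set a' B <= 1) -> dist_set a B <= excess A B.
Proof.
  intros Ha H. unfold excess.
  destruct (Lub_Rbar_correct (fun d => exists a, A a /\ d = dist_set a B)) as [Hub Hlub].
  assert (H1 := Hub (dist_set a B) (ex_intro _ a (conj Ha eq_refl))).
  assert (H2 : Rbar_le (Lub_Rbar (fun d => exists a, A a /\ d = dist_set a B)) 1).
  { apply Hlub. intros d [a' [Ha' ->]]. simpl. auto. }
  destruct (Lub_Rbar _) as [g| |]; simpl in *; lra.
Qed.

Definition unit_set (A : R -> Prop) := (forall x, A x -> 0 <= x <= 1) /\ A 0.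

Lemma dist_le1 (A B : R -> Prop) : unit_set A -> unit_set B ->
  forall a, A a -> dist_set a B <= 1.
Proof.
  intros [HA _] [HB HB0] a Ha. apply (dist_le a B 0); auto; [|lra].
  apply Rabs_le. specialize (HA a Ha). lra.
Qed.

Lemma dH_near (A B : R -> Prop) (d : R) : unit_set A -> unit_set B -> dH A B < d ->
  (forall a, A a -> exists b, B b /\ Rabs (a - b) < d) /\
  (forall b, B b -> exists a, A a /\ Rabs (b - a) < d).
Proof.
  intros UA UB Hd. unfold dH in Hd.
  assert (H1 := Rmax_l (excess A B) (excess B A)).
  assert (H2 := Rmax_r (excess A B) (excess B A)).
  split.
  - intros a Ha. apply (dist_lt a B 0); [apply UB|].
    assert (dist_set a B <= excess A B) by (apply excess_ge; auto; apply dist_le1; auto).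
    lra.
  - intros b Hb. apply (dist_lt b A 0); [apply UA|].
    assert (dist_set b A <= excess B A) by (apply excess_ge; auto; apply dist_le1; auto).
    lra.
Qed.

Lemma dH_le (A B : R -> Prop) (c : R) : 0 <= c ->
  (forall a, A a -> exists b, B b /\ Rabs (a - b) <= c) ->
  (forall b, B b -> exists a, A a /\ Rabs (b - a) <= c) -> dH A B <= c.
Proof.
  intros Hc H1 H2. unfold dH. apply Rmax_lub; apply excess_le; auto.
  - intros a Ha. destruct (H1 a Ha) as [b [Hb Hab]]. apply (dist_le a B b); auto.
  - intros b Hb. destruct (H2 b Hb) as [a [Ha Hab]]. apply (dist_le b A a); auto.
Qed.

Lemma open_ext (D D' : R -> Prop) : open_set D -> (forall x, D x <-> D' x) -> open_set D'.
Proof.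
  intros H E x Hx. destruct (H x (proj2 (E x) Hx)) as [del Hd].
  exists del. intros y Hy. apply E. apply Hd. exact Hy.
Qed.

Lemma closed_ext (D D' : R -> Prop) : closed_set D -> (forall x, D x <-> D' x) -> closed_set D'.
Proof.
  intros H E. unfold closed_set. apply (open_ext _ _ H).
  intros x. unfold complementary. rewrite (E x). tauto.
Qed.

Lemma closed_union (D1 D2 : R -> Prop) : closed_set D1 -> closed_set D2 ->
  closed_set (fun x => D1 x \/ D2 x).
Proof.
  intros H1 H2. unfold closed_set.
  apply (open_ext _ _ (open_set_P3 _ _ H1 H2)).
  intros x; unfold intersection_domain, complementary; tauto.
Qed.

Lemma closed_inter (D1 D2 : R -> Prop) : closed_set D1 -> closed_set D2 ->
  closed_set (fun x => D1 x /\ D2 x).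
Proof.
  intros H1 H2. unfold closed_set.
  apply (open_ext _ _ (open_set_P2 _ _ H1 H2)).
  intros x; unfold union_domain, complementary; split; [|tauto].
  intros H. apply NNPP. tauto.
Qed.

Lemma closed_interval (a b : R) : closed_set (fun x => a <= x <= b).
Proof. apply compact_P2, compact_P3. Qed.

Lemma calA_props (E : R -> Prop) : in_calA E ->
  exists P, E P /\ forall e, E e -> E (P - e).
Proof.
  intros [a [Ha [HE _]]].
  assert (Hex : ex_series a) by (apply ex_series_Rabs; exact Ha).
  assert (HP := Series_correct a Hex).
  exists (Series a). split.
  - apply HE. exists (fun _ => true). exact HP.
  - intros e He. apply HE. apply HE in He. destruct He as [A HA].
    exists (fun n => negb (A n)).
    assert (H := is_series_minus _ _ _ _ HP HA).
    eapply is_series_ext; [|exact H].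
    intros n. simpl. unfold plus, opp; simpl.
    destruct (A n); simpl; ring.
Qed.

Theorem mainTheorem15 : nowhere_dense_K0 in_calA.
Proof.
  intros K [[HKc [HK01 HK0]] [eps [Heps H]]].
  set (eta := Rmin eps 1 / 10).
  assert (Heta : 0 < eta) by (unfold eta; apply Rmin_case; lra).
  assert (Heta1 : 10 * eta <= eps /\ 10 * eta <= 1)
    by (unfold eta; split; [assert (h := Rmin_l eps 1)|assert (h := Rmin_r eps 1)]; lra).
  destruct (completeness K) as [M [HMub HMlub]].
  { exists 1. intros x Hx. apply (HK01 x Hx). }
  { exists 0; exact HK0. }
  assert (HM1 : M <= 1) by (apply HMlub; intros x Hx; apply (HK01 x Hx)).
  assert (HM0 : 0 <= M) by (apply HMub; exact HK0).
  assert (Hk0 : exists k0, K k0 /\ M - eta < k0).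
  { apply NNPP; intro Hn.
    assert (M <= M - eta); [|lra].
    apply HMlub. intros x Hx. destruct (Rle_lt_dec x (M - eta)) as [h|h]; auto.
    exfalso; apply Hn; exists x; auto. }
  destruct Hk0 as [k0 [Hk0K Hk0M]].
  set (T := Rmax M (5 * eta)).
  assert (HT : M <= T /\ 5 * eta <= T /\ T <= 1).
  { unfold T; split; [apply Rmax_l|split; [apply Rmax_r|apply Rmax_lub; lra]]. }
  set (L := fun x => (0 <= x <= eta) \/ (K x /\ 0 <= x <= T - 3 * eta) \/ (T <= x <= T)).
  assert (HL01 : forall x, L x -> 0 <= x <= 1).
  { intros x [h|[[h1 h2]|h]]; lra. }
  assert (HLT : forall x, L x -> x <= T).
  { intros x [h|[[h1 h2]|h]]; lra. }
  assert (HL0 : K0 L).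
  { split; [|split; [exact HL01|left; lra]].
    apply compact_P5.
    - apply closed_union; [apply closed_interval|].
      apply closed_union; [|apply closed_interval].
      apply closed_inter; [apply compact_P2; exact HKc|apply closed_interval].
    - exists 0, 1. exact HL01. }
  assert (HdKL : dH K L < eps).
  { assert (dH K L <= 5 * eta); [|lra].
    apply dH_le; [lra| |].
    - intros k Hk. assert (h1 := HK01 k Hk). assert (h2 := HMub k Hk).
      destruct (Rle_lt_dec k (T - 3 * eta)) as [h|h].
      + exists k. split; [unfold L; right; left; split; [auto|lra]|]. apply Rabs_le; lra.
      + exists T. split; [unfold L; right; right; lra|]. apply Rabs_le; lra.
    - intros l [h|[[h1 h2]|h]].
      + exists 0. split; auto. apply Rabs_le; lra.
      + exists l. split; auto. apply Rabs_le; lra.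
      + destruct (Rle_lt_dec M (5 * eta)) as [hm|hm].
        * exists 0. split; auto. apply Rabs_le.
          assert (T = 5 * eta) by (unfold T; rewrite Rmax_right; lra). lra.
        * exists k0. split; auto. apply Rabs_le.
          assert (T = M) by (unfold T; rewrite Rmax_left; lra).
          assert (h3 := HMub k0 Hk0K). lra. }
  destruct (H L HL0 HdKL) as [_ Hcl].
  destruct (Hcl (eta / 6)) as [E [[_ [HE01 HE0]] [HEA HdLE]]]; [lra|].
  destruct (dH_near L E (eta / 6)) as [N1 N2]; auto.
  { split; auto. left; lra. }
  { split; auto. }
  destruct (calA_props E HEA) as [P [HP Hsym]].
  destruct (N1 T) as [e1 [He1 He1d]]; [right; right; lra|].
  apply abs_lt in He1d.
  assert (h1 := HE01 _ (Hsym e1 He1)).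
  destruct (N2 P HP) as [l1 [Hl1 Hl1d]]. apply abs_lt in Hl1d.
  assert (h2 := HLT l1 Hl1).
  destruct (N1 (eta / 2)) as [e2 [He2 He2d]]; [left; lra|].
  apply abs_lt in He2d.
  destruct (N2 (P - e2) (Hsym e2 He2)) as [l2 [Hl2 Hl2d]]. apply abs_lt in Hl2d.
  destruct Hl2 as [h|[[h3 h4]|h]]; lra.
Qed.
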